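(* Let $X_1,X_2,X_3$ be independent real variables ranging over the open positive orthant $(0,\infty)^3$, and consider the first-order linear system of partial differential equations for an unknown smooth function $\tau=\tau(X_1,X_2,X_3)$: $$\Big(X_1(X_1+2X_2+2X_3)\frac{\partial}{\partial X_1}+X_2(X_2+2X_3)\frac{\partial}{\partial X_2}+X_3^2\frac{\partial}{\partial X_3}\Big)\tau=0,\qquad \Big(X_1\frac{\partial}{\partial X_1}+X_2\frac{\partial}{\partial X_2}+X_3\frac{\partial}{\partial X_3}\Big)\tau=0 .$$ Then the function $$\tau_1^{(2)}(X_1,X_2,X_3)=\frac{(X_1+X_2)(X_2+X_3)}{X_2\,(X_1+X_2+X_3)}$$ is a solution of this system, and it is the only nontrivial solution up to functional dependence: every solution is (locally) of the form $F\big(\tau_1^{(2)}\big)$ for some function $F$ of one variable.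
   Context: This system arises in the construction of the lattice $W_2$ algebra (the $\mathfrak{sl}_2$ case): the first operator comes from the action of the screening operator $X_1+X_2+X_3$ via the bracket $\{X_i,X_j\}=2X_iX_j$ for $i<j$, $\{X_i,X_i\}=0$, and the second operator is the degree (Euler) operator, so solutions are degree-zero invariants. *)

(* Defs.v *)
From Stdlib Require Import Reals.
From Coquelicot Require Import Coquelicot.
Open Scope R_scope.

Definition orthant (x1 x2 x3 : R) : Prop := 0 < x1 /\ 0 < x2 /\ 0 < x3.

Definition d1 (f : R -> R -> R -> R) : R -> R -> R -> R :=
  fun x1 x2 x3 => Derive (fun t => f t x2 x3) x1.
Definition d2 (f : R -> R -> R -> R) : R -> R -> R -> R :=
  fun x1 x2 x3 => Derive (fun t => f x1 t x3) x2.
Definition d3 (f : R -> R -> R -> R) : R -> R -> R -> R :=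
  fun x1 x2 x3 => Derive (fun t => f x1 x2 t) x3.

Definition has_partials (f : R -> R -> R -> R) (x1 x2 x3 : R) : Prop :=
  ex_derive (fun t => f t x2 x3) x1 /\
  ex_derive (fun t => f x1 t x3) x2 /\
  ex_derive (fun t => f x1 x2 t) x3.

Definition cont3_at (f : R -> R -> R -> R) (x1 x2 x3 : R) : Prop :=
  forall eps, 0 < eps -> exists delta, 0 < delta /\
    forall y1 y2 y3, Rabs (y1 - x1) < delta -> Rabs (y2 - x2) < delta ->
      Rabs (y3 - x3) < delta -> Rabs (f y1 y2 y3 - f x1 x2 x3) < eps.

Fixpoint Ck_orthant (k : nat) (f : R -> R -> R -> R) : Prop :=
  match k with
  | O => forall x1 x2 x3, orthant x1 x2 x3 -> cont3_at f x1 x2 x3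
  | S m => (forall x1 x2 x3, orthant x1 x2 x3 -> cont3_at f x1 x2 x3) /\
           (forall x1 x2 x3, orthant x1 x2 x3 -> has_partials f x1 x2 x3) /\
           Ck_orthant m (d1 f) /\ Ck_orthant m (d2 f) /\ Ck_orthant m (d3 f)
  end.

Definition smooth_orthant (f : R -> R -> R -> R) : Prop :=
  forall k, Ck_orthant k f.

Definition L1 (f : R -> R -> R -> R) (x1 x2 x3 : R) : R :=
  x1 * (x1 + 2 * x2 + 2 * x3) * d1 f x1 x2 x3
  + x2 * (x2 + 2 * x3) * d2 f x1 x2 x3
  + x3 ^ 2 * d3 f x1 x2 x3.

Definition L2 (f : R -> R -> R -> R) (x1 x2 x3 : R) : R :=
  x1 * d1 f x1 x2 x3 + x2 * d2 f x1 x2 x3 + x3 * d3 f x1 x2 x3.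

Definition is_solution (tau : R -> R -> R -> R) : Prop :=
  forall x1 x2 x3, orthant x1 x2 x3 ->
    has_partials tau x1 x2 x3 /\ L1 tau x1 x2 x3 = 0 /\ L2 tau x1 x2 x3 = 0.

Definition tau12 (x1 x2 x3 : R) : R :=
  (x1 + x2) * (x2 + x3) / (x2 * (x1 + x2 + x3)).

(* Main.v *)
Require Import Defs.
From Stdlib Require Import Reals Lra.
From Coquelicot Require Import Coquelicot.
Import Defs.
Open Scope R_scope.

Lemma between_abs a b x : Rmin a b <= x <= Rmax a b -> Rabs (x - a) <= Rabs (b - a).
Proof.
  unfold Rmin, Rmax; destruct (Rle_dec a b); intros H;
  unfold Rabs; destruct (Rcase_abs (x - a)); destruct (Rcase_abs (b - a)); lra.
Qed.

Lemma mvt_est (h : R -> R) (a b D e : R) :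
  (forall x, Rmin a b <= x <= Rmax a b -> ex_derive h x) ->
  (forall x, Rmin a b <= x <= Rmax a b -> Rabs (Derive h x - D) < e) ->
  Rabs (h b - h a - D * (b - a)) <= e * Rabs (b - a).
Proof.
  intros Hd Hc.
  destruct (MVT_gen h a b (Derive h)) as [c [Hc1 Hc2]].
  - intros x Hx. apply Derive_correct, Hd; lra.
  - intros x Hx. apply continuity_pt_filterlim. apply (ex_derive_continuous (K:=R_AbsRing) (V:=R_NormedModule)). apply Hd; lra.
  - rewrite Hc2.
    replace (Derive h c * (b - a) - D * (b - a)) with ((Derive h c - D) * (b - a)) by ring.
    rewrite Rabs_mult. apply Rmult_le_compat_r; [apply Rabs_pos|left; apply Hc; exact Hc1].
Qed.

Lemma diff3 (f : R -> R -> R -> R) (p1 p2 p3 r : R) : 0 < r ->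
  (forall y1 y2 y3, Rabs (y1-p1) < r -> Rabs (y2-p2) < r -> Rabs (y3-p3) < r ->
     has_partials f y1 y2 y3) ->
  cont3_at (d1 f) p1 p2 p3 -> cont3_at (d2 f) p1 p2 p3 -> cont3_at (d3 f) p1 p2 p3 ->
  forall e, 0 < e -> exists d, 0 < d /\ forall a1 a2 a3,
    Rabs (a1-p1) < d -> Rabs (a2-p2) < d -> Rabs (a3-p3) < d ->
    Rabs (f a1 a2 a3 - f p1 p2 p3 - (d1 f p1 p2 p3 * (a1-p1) + d2 f p1 p2 p3 * (a2-p2)
          + d3 f p1 p2 p3 * (a3-p3)))
      <= e * (Rabs (a1-p1) + Rabs (a2-p2) + Rabs (a3-p3)).
Proof.
  intros Hr Hp C1 C2 C3 e He.
  destruct (C1 e He) as [e1 [He1 H1]].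
  destruct (C2 e He) as [e2 [He2 H2]].
  destruct (C3 e He) as [e3 [He3 H3]].
  exists (Rmin r (Rmin e1 (Rmin e2 e3))).
  assert (m1 := Rmin_l r (Rmin e1 (Rmin e2 e3))).
  assert (m2 := Rmin_r r (Rmin e1 (Rmin e2 e3))).
  assert (m3 := Rmin_l e1 (Rmin e2 e3)).
  assert (m4 := Rmin_r e1 (Rmin e2 e3)).
  assert (m5 := Rmin_l e2 e3).
  assert (m6 := Rmin_r e2 e3).
  split. { repeat apply Rmin_pos; lra. }
  intros a1 a2 a3 A1 A2 A3.
  assert (Z1 : Rabs (p1 - p1) = 0) by (rewrite Rminus_diag_eq; [apply Rabs_R0|reflexivity]).
  assert (Z2 : Rabs (p2 - p2) = 0) by (rewrite Rminus_diag_eq; [apply Rabs_R0|reflexivity]).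
  assert (T1 : Rabs (f a1 a2 a3 - f p1 a2 a3 - d1 f p1 p2 p3 * (a1 - p1)) <= e * Rabs (a1 - p1)).
  { apply (mvt_est (fun t => f t a2 a3)).
    - intros x Hx. apply between_abs in Hx. apply (Hp x a2 a3); lra.
    - intros x Hx. apply between_abs in Hx. apply (H1 x a2 a3); lra. }
  assert (T2 : Rabs (f p1 a2 a3 - f p1 p2 a3 - d2 f p1 p2 p3 * (a2 - p2)) <= e * Rabs (a2 - p2)).
  { apply (mvt_est (fun t => f p1 t a3)).
    - intros x Hx. apply between_abs in Hx. apply (Hp p1 x a3); lra.
    - intros x Hx. apply between_abs in Hx. apply (H2 p1 x a3); lra. }
  assert (T3 : Rabs (f p1 p2 a3 - f p1 p2 p3 - d3 f p1 p2 p3 * (a3 - p3)) <= e * Rabs (a3 - p3)).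
  { apply (mvt_est (fun t => f p1 p2 t)).
    - intros x Hx. apply between_abs in Hx. apply (Hp p1 p2 x); lra.
    - intros x Hx. apply between_abs in Hx. apply (H3 p1 p2 x); lra. }
  match goal with |- Rabs ?E <= _ =>
    replace E with ((f a1 a2 a3 - f p1 a2 a3 - d1 f p1 p2 p3 * (a1 - p1))
       + (f p1 a2 a3 - f p1 p2 a3 - d2 f p1 p2 p3 * (a2 - p2))
       + (f p1 p2 a3 - f p1 p2 p3 - d3 f p1 p2 p3 * (a3 - p3))) by ring end.
  eapply Rle_trans; [apply Rabs_triang|].
  eapply Rle_trans; [apply Rplus_le_compat_r; apply Rabs_triang|].
  lra.
Qed.
Lemma chain3 (f : R -> R -> R -> R) (g1 g2 g3 : R -> R) (t l1 l2 l3 r : R) : 0 < r ->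
  (forall y1 y2 y3, Rabs (y1 - g1 t) < r -> Rabs (y2 - g2 t) < r -> Rabs (y3 - g3 t) < r ->
     has_partials f y1 y2 y3) ->
  cont3_at (d1 f) (g1 t) (g2 t) (g3 t) -> cont3_at (d2 f) (g1 t) (g2 t) (g3 t) ->
  cont3_at (d3 f) (g1 t) (g2 t) (g3 t) ->
  is_derive g1 t l1 -> is_derive g2 t l2 -> is_derive g3 t l3 ->
  is_derive (fun s => f (g1 s) (g2 s) (g3 s)) t
    (d1 f (g1 t) (g2 t) (g3 t) * l1 + d2 f (g1 t) (g2 t) (g3 t) * l2
     + d3 f (g1 t) (g2 t) (g3 t) * l3).
Proof.
  intros Hr Hp C1 C2 C3 G1 G2 G3.
  apply is_derive_Reals. apply is_derive_Reals in G1, G2, G3.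
  set (p1 := g1 t) in *. set (p2 := g2 t) in *. set (p3 := g3 t) in *.
  set (D1 := d1 f p1 p2 p3). set (D2 := d2 f p1 p2 p3). set (D3 := d3 f p1 p2 p3).
  intros eps Heps.
  set (M := Rabs l1 + Rabs l2 + Rabs l3 + 3).
  assert (HM : 3 <= M) by (unfold M; generalize (Rabs_pos l1) (Rabs_pos l2) (Rabs_pos l3); lra).
  destruct (diff3 f p1 p2 p3 r Hr Hp C1 C2 C3 (eps / (2 * M))) as [d [Hd Hdiff]].
  { apply Rdiv_lt_0_compat; lra. }
  set (K := Rabs D1 + Rabs D2 + Rabs D3 + 1).
  assert (HK : 1 <= K) by (unfold K; generalize (Rabs_pos D1) (Rabs_pos D2) (Rabs_pos D3); lra).
  set (eta := Rmin 1 (eps / (2 * K))).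
  assert (Heta : 0 < eta) by (apply Rmin_pos; [lra| apply Rdiv_lt_0_compat; lra]).
  assert (Heta1 : eta <= 1) by apply Rmin_l.
  assert (Heta2 : eta <= eps / (2 * K)) by apply Rmin_r.
  destruct (G1 eta Heta) as [e1 He1].
  destruct (G2 eta Heta) as [e2 He2].
  destruct (G3 eta Heta) as [e3 He3].
  assert (HdM : 0 < d / M) by (apply Rdiv_lt_0_compat; lra).
  exists (mkposreal _ (Rmin_pos _ _ (Rmin_pos _ _ (cond_pos e1) (cond_pos e2))
                      (Rmin_pos _ _ (cond_pos e3) HdM))).
  simpl. intros h Hh0 Hh.
  assert (q1 := Rmin_l (Rmin e1 e2) (Rmin e3 (d / M))).
  assert (q2 := Rmin_r (Rmin e1 e2) (Rmin e3 (d / M))).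
  assert (q3 := Rmin_l e1 e2). assert (q4 := Rmin_r e1 e2).
  assert (q5 := Rmin_l e3 (d / M)). assert (q6 := Rmin_r e3 (d / M)).
  specialize (He1 h Hh0 ltac:(lra)). specialize (He2 h Hh0 ltac:(lra)).
  specialize (He3 h Hh0 ltac:(lra)).
  change (g1 t) with p1 in He1. change (g2 t) with p2 in He2. change (g3 t) with p3 in He3.
  set (u1 := (g1 (t + h) - p1) / h) in *.
  set (u2 := (g2 (t + h) - p2) / h) in *.
  set (u3 := (g3 (t + h) - p3) / h) in *.
  assert (E1 : g1 (t + h) - p1 = u1 * h) by (unfold u1; field; exact Hh0).
  assert (E2 : g2 (t + h) - p2 = u2 * h) by (unfold u2; field; exact Hh0).
  assert (E3 : g3 (t + h) - p3 = u3 * h) by (unfold u3; field; exact Hh0).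
  assert (Hah : 0 < Rabs h) by (apply Rabs_pos_lt; exact Hh0).
  assert (Hhd : Rabs h * M < d).
  { apply Rmult_lt_reg_r with (/ M). apply Rinv_0_lt_compat; lra.
    rewrite Rmult_assoc, Rinv_r by lra. rewrite Rmult_1_r. unfold Rdiv in q6. lra. }
  assert (U : forall u l, Rabs (u - l) < eta -> Rabs u <= Rabs l + 1).
  { intros u l Hu. assert (Rabs u <= Rabs (u - l) + Rabs l).
    { replace u with ((u - l) + l) at 1 by ring. apply Rabs_triang. } lra. }
  assert (U1 := U _ _ He1). assert (U2 := U _ _ He2). assert (U3 := U _ _ He3).
  assert (L1' : Rabs l1 <= M - 2) by (unfold M; generalize (Rabs_pos l2) (Rabs_pos l3); lra).
  assert (L2' : Rabs l2 <= M - 2) by (unfold M; generalize (Rabs_pos l1) (Rabs_pos l3); lra).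
  assert (L3' : Rabs l3 <= M - 2) by (unfold M; generalize (Rabs_pos l1) (Rabs_pos l2); lra).
  assert (B : forall u l, Rabs (u - l) < eta -> Rabs l <= M - 2 -> Rabs (u * h) < d).
  { intros u l Hu Hl. rewrite Rabs_mult. assert (Hu' := U _ _ Hu).
    assert (Rabs u <= M) by lra.
    assert (Rabs u * Rabs h <= M * Rabs h) by (apply Rmult_le_compat_r; [apply Rabs_pos|lra]).
    lra. }
  specialize (Hdiff (g1 (t + h)) (g2 (t + h)) (g3 (t + h))).
  rewrite E1, E2, E3 in Hdiff.
  specialize (Hdiff (B _ _ He1 L1') (B _ _ He2 L2') (B _ _ He3 L3')).
  set (Rr := f (g1 (t + h)) (g2 (t + h)) (g3 (t + h)) - f p1 p2 p3
             - (D1 * (u1 * h) + D2 * (u2 * h) + D3 * (u3 * h))) in Hdiff.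
  change (f (g1 t) (g2 t) (g3 t)) with (f p1 p2 p3).
  replace ((f (g1 (t + h)) (g2 (t + h)) (g3 (t + h)) - f p1 p2 p3) / h - (D1 * l1 + D2 * l2 + D3 * l3))
    with (Rr / h + (D1 * (u1 - l1) + D2 * (u2 - l2) + D3 * (u3 - l3)))
    by (unfold Rr; field; exact Hh0).
  assert (RA : Rabs (Rr / h) <= eps / 2).
  { unfold Rdiv at 1. rewrite Rabs_mult, Rabs_inv.
    rewrite !Rabs_mult in Hdiff.
    apply Rmult_le_reg_r with (Rabs h); [lra|].
    rewrite Rmult_assoc, Rinv_l by lra. rewrite Rmult_1_r.
    eapply Rle_trans; [exact Hdiff|].
    assert (Hs : Rabs u1 + Rabs u2 + Rabs u3 <= M) by (unfold M; lra).
    assert (Hc : eps / (2 * M) * M = eps / 2) by (field; lra).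
    assert (0 <= eps / (2 * M)) by (left; apply Rdiv_lt_0_compat; lra).
    replace (eps / (2 * M) * (Rabs u1 * Rabs h + Rabs u2 * Rabs h + Rabs u3 * Rabs h))
      with (eps / (2 * M) * (Rabs u1 + Rabs u2 + Rabs u3) * Rabs h) by ring.
    apply Rmult_le_compat_r; [lra|]. rewrite <- Hc.
    apply Rmult_le_compat_l; lra. }
  assert (RB : Rabs (D1 * (u1 - l1) + D2 * (u2 - l2) + D3 * (u3 - l3)) < eps / 2).
  { eapply Rle_lt_trans; [apply Rabs_triang|].
    eapply Rle_lt_trans; [apply Rplus_le_compat_r; apply Rabs_triang|].
    rewrite !Rabs_mult.
    assert (Hc : eps / (2 * K) * K = eps / 2) by (field; lra).
    generalize (Rabs_pos D1) (Rabs_pos D2) (Rabs_pos D3); intros.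
    assert (Rabs D1 * Rabs (u1 - l1) + Rabs D2 * Rabs (u2 - l2) + Rabs D3 * Rabs (u3 - l3)
            <= (Rabs D1 + Rabs D2 + Rabs D3) * eta) by nra.
    assert ((Rabs D1 + Rabs D2 + Rabs D3) * eta < K * eta) by (unfold K; nra).
    assert (K * eta <= K * (eps / (2 * K))) by nra.
    lra. }
  eapply Rle_lt_trans; [apply Rabs_triang|]. lra.
Qed.

Lemma const_path (g : R -> R) a b :
  (forall x, Rmin a b <= x <= Rmax a b -> is_derive g x 0) -> g a = g b.
Proof.
  intros H.
  destruct (MVT_gen g a b (fun _ => 0)) as [c [Hc1 Hc2]].
  - intros x Hx. apply H; lra.
  - intros x Hx. apply continuity_pt_filterlim.
    apply (ex_derive_continuous (K:=R_AbsRing) (V:=R_NormedModule)).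
    exists 0. apply H; lra.
  - lra.
Qed.

Lemma deriv_tau_zero (tau : R -> R -> R -> R) (g1 g2 g3 : R -> R) (t l1 l2 l3 : R) :
  smooth_orthant tau -> orthant (g1 t) (g2 t) (g3 t) ->
  is_derive g1 t l1 -> is_derive g2 t l2 -> is_derive g3 t l3 ->
  d1 tau (g1 t) (g2 t) (g3 t) * l1 + d2 tau (g1 t) (g2 t) (g3 t) * l2
     + d3 tau (g1 t) (g2 t) (g3 t) * l3 = 0 ->
  is_derive (fun s => tau (g1 s) (g2 s) (g3 s)) t 0.
Proof.
  intros Hs Ho G1 G2 G3 Hz. rewrite <- Hz.
  destruct (Hs 1%nat) as [_ [Hp [C1 [C2 C3]]]].
  destruct Ho as [P1 [P2 P3]].
  assert (m1 := Rmin_l (g1 t) (Rmin (g2 t) (g3 t))).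
  assert (m2 := Rmin_r (g1 t) (Rmin (g2 t) (g3 t))).
  assert (m3 := Rmin_l (g2 t) (g3 t)). assert (m4 := Rmin_r (g2 t) (g3 t)).
  apply (chain3 tau g1 g2 g3 t l1 l2 l3 (Rmin (g1 t) (Rmin (g2 t) (g3 t)))).
  - repeat apply Rmin_pos; assumption.
  - intros y1 y2 y3 A1 A2 A3. apply Hp.
    apply Rabs_def2 in A1, A2, A3. unfold orthant; lra.
  - apply C1. unfold orthant; auto.
  - apply C2. unfold orthant; auto.
  - apply C3. unfold orthant; auto.
  - exact G1.
  - exact G2.
  - exact G3.
Qed.

Lemma ray (tau : R -> R -> R -> R) y1 y2 y3 lam :
  smooth_orthant tau -> is_solution tau -> orthant y1 y2 y3 -> 0 < lam ->
  tau (lam * y1) (lam * y2) (lam * y3) = tau y1 y2 y3.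
Proof.
  intros Hs Hsol [P1 [P2 P3]] Hl.
  symmetry.
  rewrite <- (Rmult_1_l y1) at 1. rewrite <- (Rmult_1_l y2) at 1. rewrite <- (Rmult_1_l y3) at 1.
  apply (const_path (fun s => tau (s * y1) (s * y2) (s * y3)) 1 lam).
  intros x Hx.
  assert (Hx0 : 0 < x).
  { revert Hx. unfold Rmin, Rmax; destruct (Rle_dec 1 lam); lra. }
  assert (Ho : orthant (x * y1) (x * y2) (x * y3)) by (unfold orthant; repeat split; nra).
  apply (deriv_tau_zero tau (fun s => s * y1) (fun s => s * y2) (fun s => s * y3) x y1 y2 y3 Hs Ho).
  - auto_derive; [trivial| ring].
  - auto_derive; [trivial| ring].
  - auto_derive; [trivial| ring].
  - destruct (Hsol _ _ _ Ho) as [_ [_ HL2]]. unfold L2 in HL2.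
    apply Rmult_eq_reg_l with x; [|lra]. rewrite Rmult_0_r. rewrite <- HL2. ring.
Qed.

Lemma curve (tau : R -> R -> R -> R) c a b :
  smooth_orthant tau -> is_solution tau -> 1 < c -> c < a -> c < b ->
  tau (a - 1) 1 (c * (a - 1) / (a - c) - 1) = tau (b - 1) 1 (c * (b - 1) / (b - c) - 1).
Proof.
  intros Hs Hsol Hc Ha Hb.
  apply (const_path (fun p => tau (p - 1) 1 (c * (p - 1) / (p - c) - 1)) a b).
  intros x Hx.
  assert (Hx0 : c < x).
  { revert Hx. unfold Rmin, Rmax; destruct (Rle_dec a b); lra. }
  assert (Hq : 0 < c * (x - 1) / (x - c) - 1).
  { replace (c * (x - 1) / (x - c) - 1) with (x * (c - 1) / (x - c)) by (field; lra).
    apply Rdiv_lt_0_compat; nra. }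
  assert (Ho : orthant (x - 1) 1 (c * (x - 1) / (x - c) - 1)) by (unfold orthant; repeat split; lra).
  apply (deriv_tau_zero tau (fun p => p - 1) (fun _ => 1) (fun p => c * (p - 1) / (p - c) - 1)
           x 1 0 (c * (1 - c) / ((x - c) * (x - c))) Hs Ho).
  - auto_derive; [trivial| ring].
  - auto_derive; [trivial| ring].
  - auto_derive; [lra| field; lra].
  - destruct (Hsol _ _ _ Ho) as [_ [HL1 HL2]]. unfold L1, L2 in HL1, HL2.
    set (q := c * (x - 1) / (x - c) - 1) in *.
    set (D1 := d1 tau (x - 1) 1 q) in *.
    set (D2 := d2 tau (x - 1) 1 q) in *.
    set (D3 := d3 tau (x - 1) 1 q) in *.
    apply Rmult_eq_reg_l with ((x - 1) * x); [|nra].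
    rewrite Rmult_0_r.
    transitivity ((x - 1) * (x - 1 + 2 * 1 + 2 * q) * D1 + 1 * (1 + 2 * q) * D2 + q ^ 2 * D3
                  - (1 + 2 * q) * ((x - 1) * D1 + 1 * D2 + q * D3)).
    + unfold q. field. lra.
    + rewrite HL1, HL2. ring.
Qed.

Lemma tau12_sol : is_solution tau12.
Proof.
  intros x1 x2 x3 [P1 [P2 P3]].
  assert (E1 : is_derive (fun t => tau12 t x2 x3) x1
     (x2 * x3 * (x2 + x3) / ((x2 * (x1 + x2 + x3)) * (x2 * (x1 + x2 + x3))))).
  { unfold tau12. auto_derive; [nra| field; nra]. }
  assert (E2 : is_derive (fun t => tau12 x1 t x3) x2
     (- (x1 * x3 * (x1 + 2 * x2 + x3)) / ((x2 * (x1 + x2 + x3)) * (x2 * (x1 + x2 + x3))))).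
  { unfold tau12. auto_derive; [nra| field; nra]. }
  assert (E3 : is_derive (fun t => tau12 x1 x2 t) x3
     (x1 * x2 * (x1 + x2) / ((x2 * (x1 + x2 + x3)) * (x2 * (x1 + x2 + x3))))).
  { unfold tau12. auto_derive; [nra| field; nra]. }
  assert (F1 : d1 tau12 x1 x2 x3 = x2 * x3 * (x2 + x3) / ((x2 * (x1 + x2 + x3)) * (x2 * (x1 + x2 + x3))))
    by (apply is_derive_unique; exact E1).
  assert (F2 : d2 tau12 x1 x2 x3 = - (x1 * x3 * (x1 + 2 * x2 + x3)) / ((x2 * (x1 + x2 + x3)) * (x2 * (x1 + x2 + x3))))
    by (apply is_derive_unique; exact E2).
  assert (F3 : d3 tau12 x1 x2 x3 = x1 * x2 * (x1 + x2) / ((x2 * (x1 + x2 + x3)) * (x2 * (x1 + x2 + x3))))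
    by (apply is_derive_unique; exact E3).
  split; [|split].
  - repeat split; eexists; eassumption.
  - unfold L1.
    rewrite F1, F2, F3.
    field. nra.
  - unfold L2.
    rewrite F1, F2, F3.
    field. nra.
Qed.

Theorem mainTheorem1 :
  is_solution tau12 /\
  (forall tau : R -> R -> R -> R,
     smooth_orthant tau -> is_solution tau ->
     forall x1 x2 x3, orthant x1 x2 x3 ->
       exists delta, 0 < delta /\
       exists F : R -> R,
         forall y1 y2 y3, orthant y1 y2 y3 ->
           Rabs (y1 - x1) < delta -> Rabs (y2 - x2) < delta ->
           Rabs (y3 - x3) < delta ->
           tau y1 y2 y3 = F (tau12 y1 y2 y3)).
Proof.
  split; [exact tau12_sol|].
  intros tau Hs Hsol x1 x2 x3 _.
  exists 1. split; [lra|].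
  exists (fun c => tau (2 * c - 1) 1 (2 * c - 2)).
  intros y1 y2 y3 Ho _ _ _.
  destruct Ho as [P1 [P2 P3]].
  rewrite <- (ray tau y1 y2 y3 (/ y2) Hs Hsol ltac:(unfold orthant; auto)
                ltac:(apply Rinv_0_lt_compat; lra)).
  set (z1 := / y2 * y1). set (z3 := / y2 * y3).
  assert (Z1 : 0 < z1) by (unfold z1; apply Rmult_lt_0_compat; [apply Rinv_0_lt_compat|]; lra).
  assert (Z3 : 0 < z3) by (unfold z3; apply Rmult_lt_0_compat; [apply Rinv_0_lt_compat|]; lra).
  replace (/ y2 * y2) with 1 by (field; lra).
  set (c := tau12 y1 y2 y3).
  assert (Ec : c = (z1 + 1) * (1 + z3) / (z1 + 1 + z3)).
  { unfold c, tau12, z1, z3. field. split; lra. }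
  assert (Hc1 : 1 < c).
  { rewrite Ec. apply Rlt_le_trans with ((z1 + 1 + z3) / (z1 + 1 + z3) + z1 * z3 / (z1 + 1 + z3)).
    - assert (0 < z1 * z3 / (z1 + 1 + z3)) by (apply Rdiv_lt_0_compat; nra).
      replace ((z1 + 1 + z3) / (z1 + 1 + z3)) with 1 by (field; lra). lra.
    - right. field. lra. }
  assert (Hp0 : c < z1 + 1).
  { rewrite Ec.
    apply Rplus_lt_reg_r with (- ((z1 + 1) * (1 + z3) / (z1 + 1 + z3))).
    replace (z1 + 1 + - ((z1 + 1) * (1 + z3) / (z1 + 1 + z3))) with ((z1 + 1) * z1 / (z1 + 1 + z3))
      by (field; lra).
    replace ((z1 + 1) * (1 + z3) / (z1 + 1 + z3) + - ((z1 + 1) * (1 + z3) / (z1 + 1 + z3))) with 0 by ring.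
    apply Rdiv_lt_0_compat; nra. }
  assert (Ez3 : z3 = c * (z1 + 1 - 1) / (z1 + 1 - c) - 1).
  { assert (Hne : z1 + 1 - c <> 0) by lra. rewrite Ec in Hne.
    rewrite Ec. field. repeat split; try lra; intro H; nra. }
  replace z1 with (z1 + 1 - 1) at 1 by ring.
  rewrite Ez3.
  rewrite (curve tau c (z1 + 1) (2 * c) Hs Hsol Hc1 Hp0 ltac:(lra)).
  f_equal. field. lra.
Qed.
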